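(* In the setting of the context, let $\alpha,\beta\in R$ be distinct roots with $\pi(\alpha)=\pi(\beta)$. Then $\pi_k[\mathfrak g_\alpha,\mathfrak g_{-\beta}]\subseteq C_{\mathfrak g}(\mathfrak h^\sigma)$ for each $k\in\mathbb Z$. Moreover, $\pi[\mathfrak g_\alpha,\mathfrak g_{-\beta}]=0$.
   Context: All Lie algebras are over $\mathbb C$. An extended affine Lie algebra (EALA) is a triple $(\mathfrak g,(\cdot,\cdot),\mathfrak h)$ where $\mathfrak g$ is a Lie algebra, $\mathfrak h$ a subalgebra and $(\cdot,\cdot)$ a bilinear form such that: the form is symmetric, non-degenerate, invariant; $\mathfrak h$ is finite-dimensional and $\mathfrak g=\bigoplus_{\alpha\in\mathfrak h^*}\mathfrak g_\alpha$, $\mathfrak g_\alpha=\{x:[h,x]=\alpha(h)x\ \forall h\in\mathfrak h\}$, $\mathfrak g_0=\mathfrak h$; with root system $R=\{\alpha:\mathfrak g_\alpha\ne0\}$ ($\mathfrak g_\gamma=0$ for $\gamma\notin R$), $t_\alpha\in\mathfrak h$ given by $\alpha(h)=(h,t_\alpha)$, $(\alpha,\beta)=(t_\alpha,t_\beta)$, $R^\times=\{\alpha\in R:(\alpha,\alpha)\ne0\}$, $R^0=R\setminus R^\times$: $\mathrm{ad}\,x$ locally nilpotent for $x\in\mathfrak g_\alpha$, $\alpha\in R^\times$; $R$ discrete; $R^\times$ connected and isotropic roots non-isolated. Root systems assumed reduced. Setting: $(\mathfrak g,(\cdot,\cdot),\mathfrak h)$ is an EALA with root system $R$; $\sigma$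 is an automorphism of $\mathfrak g$ with $\sigma^m=\mathrm{id}$ ($m\ge1$), $\sigma(\mathfrak h)=\mathfrak h$, $(\sigma x,\sigma y)=(x,y)$ for all $x,y$, and $C_{\mathfrak g^\sigma}(\mathfrak h^\sigma)=\mathfrak h^\sigma$, where $\mathfrak g^\sigma,\mathfrak h^\sigma$ are the fixed points and $C$ denotes centralizer. $\sigma$ acts on $\mathfrak h^*$ by $\sigma(\alpha)(h)=\alpha(\sigma^{-1}h)$. Let $\omega$ be a primitive $m$-th root of unity and $\pi_j=\frac1m\sum_{i=0}^{m-1}\omega^{-ij}\sigma^i$ (indices mod $m$), acting on $\mathfrak g$ and on $\mathfrak h^*$; $\pi=\pi_0$. *)

(* Defs.v *)
From HB Require Import structures.
From mathcomp Require Import all_boot all_order all_algebra all_field.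

Set Implicit Arguments.
Unset Strict Implicit.
Unset Printing Implicit Defensive.

Import Order.TTheory GRing.Theory Num.Theory.
Local Open Scope ring_scope.

(* The Lie algebra g is an algC-module V with a bracket br.
   The Cartan subalgebra h is a finite-dimensional algC-vector space H
   embedded in V by the injective linear map iota.  Elements of h^* are
   functions H -> algC (weights with non-zero weight space are automatically
   linear). *)

Definition is_lie_bracket (V : lmodType algC) (br : V -> V -> V) : Prop :=
  [/\ (forall (a : algC) (x y z : V), br (a *: x + y) z = a *: br x z + br y z),
      (forall (a : algC) (x y z : V), br x (a *: y + z) = a *: br x y + br x z),
      (forall x : V, br x x = 0) &
      (forall x y z : V, br x (br y z) + br y (br z x) + br z (br x y) = 0)].

Definition is_good_form (V : lmodType algC) (br : V -> V -> V)
    (B : V -> V -> algC) : Prop :=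
  [/\ (forall (a : algC) (x y z : V), B (a *: x + y) z = a * B x z + B y z),
      (forall x y : V, B x y = B y x),
      (forall x : V, (forall y : V, B x y = 0) -> x = 0) &
      (forall x y z : V, B (br x y) z = B x (br y z))].

Definition wspace (V : lmodType algC) (br : V -> V -> V) (H : vectType algC)
    (iota : H -> V) (f : H -> algC) (x : V) : Prop :=
  forall a : H, br (iota a) x = f a *: x.

Definition root_of (V : lmodType algC) (br : V -> V -> V) (H : vectType algC)
    (iota : H -> V) (f : H -> algC) : Prop :=
  exists x : V, x <> 0 /\ wspace br iota f x.

Definition is_t (V : lmodType algC) (B : V -> V -> algC) (H : vectType algC)
    (iota : H -> V) (f : H -> algC) (t : H) : Prop :=
  forall a : H, f a = B (iota a) (iota t).

Definition nonisotropic_root (V : lmodType algC) (br : V -> V -> V)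
    (B : V -> V -> algC) (H : vectType algC) (iota : H -> V) (f : H -> algC) :=
  root_of br iota f /\ exists t, is_t B iota f t /\ B (iota t) (iota t) <> 0.

Definition isotropic_root (V : lmodType algC) (br : V -> V -> V)
    (B : V -> V -> algC) (H : vectType algC) (iota : H -> V) (f : H -> algC) :=
  root_of br iota f /\ exists t, is_t B iota f t /\ B (iota t) (iota t) = 0.

Definition orth_forms (V : lmodType algC) (B : V -> V -> algC)
    (H : vectType algC) (iota : H -> V) (f g : H -> algC) :=
  exists tf tg, [/\ is_t B iota f tf, is_t B iota g tg &
                    B (iota tf) (iota tg) = 0].

Definition hdist (H : vectType algC) (f g : H -> algC) : algC :=
  \sum_(b <- vbasis (fullv : {vspace H})) `|f b - g b|.

Definition is_EALA (V : lmodType algC) (br : V -> V -> V) (B : V -> V -> algC)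
    (H : vectType algC) (iota : {linear H -> V}) : Prop :=
  let R := root_of br iota in
  let Rx := nonisotropic_root br B iota in
  let R0 := isotropic_root br B iota in
  is_lie_bracket br /\ is_good_form br B /\ injective iota /\
   (forall a b : H, exists c : H, br (iota a) (iota b) = iota c) /\
   (forall x : V, wspace br iota (fun _ => 0) x <-> exists a : H, x = iota a) /\
   (forall x : V, exists (n : nat) (f : 'I_n -> H -> algC) (v : 'I_n -> V),
        (forall i, wspace br iota (f i) (v i)) /\ x = \sum_(i < n) v i) /\
   (forall (n : nat) (f : 'I_n -> H -> algC) (v : 'I_n -> V),
        injective f -> (forall i, wspace br iota (f i) (v i)) ->
        \sum_(i < n) v i = 0 -> forall i, v i = 0) /\
   (forall (f : H -> algC) (x : V), Rx f -> wspace br iota f x ->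
        forall y : V, exists n : nat, iter n (br x) y = 0) /\
   (forall f, R f -> exists2 eps : algC, 0 < eps &
        forall g, R g -> hdist f g < eps -> g = f) /\
   (* R^x connected (indecomposable) *)
   (forall P1 P2 : (H -> algC) -> Prop,
        (forall f, Rx f <-> P1 f \/ P2 f) ->
        (forall f, ~ (P1 f /\ P2 f)) ->
        (forall f g, P1 f -> P2 g -> orth_forms B iota f g) ->
        (forall f, ~ P1 f) \/ (forall f, ~ P2 f)) /\
   (* isotropic roots are non-isolated *)
   (forall d, R0 d -> exists f, Rx f /\ R (fun a => f a + d a)) /\
   (forall f, Rx f -> ~ R (fun a => 2 * f a)).

Definition twisting_aut (V : lmodType algC) (br : V -> V -> V)
    (B : V -> V -> algC) (H : vectType algC) (iota : {linear H -> V})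
    (sigma : {linear V -> V}) (sH : H -> H) (m : nat) : Prop :=
  (0 < m)%N /\
      (forall x y : V, sigma (br x y) = br (sigma x) (sigma y)) /\
      (forall x : V, iter m (fun v => sigma v) x = x) /\
      (forall a : H, iota (sH a) = sigma (iota a)) /\
      (forall x y : V, B (sigma x) (sigma y) = B x y) /\
      (forall x : V,
         (sigma x = x /\ forall a : H, sigma (iota a) = iota a -> br (iota a) x = 0)
         <-> exists2 a : H, x = iota a & sigma (iota a) = iota a).

Definition pi_g (V : lmodType algC) (sigma : {linear V -> V}) (m : nat)
    (omega : algC) (k : int) (x : V) : V :=
  (m%:R)^-1 *: \sum_(i < m) (omega ^ (- (i%:Z * k))) *: iter i (fun v => sigma v) x.

(* action of sigma on h^*: sigma(f)(a) = f(sigma^{-1} a), sigma^{-1} = sigma^{m-1} *)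
Definition act_dual (H : vectType algC) (sH : H -> H) (m : nat)
    (f : H -> algC) : H -> algC :=
  fun a => f (iter m.-1 sH a).

Definition pi_dual (H : vectType algC) (sH : H -> H) (m : nat)
    (f : H -> algC) : H -> algC :=
  fun a => (m%:R)^-1 * \sum_(i < m) iter i (act_dual sH m) f a.

Definition bracket_span (V : lmodType algC) (br : V -> V -> V)
    (P Q : V -> Prop) (z : V) : Prop :=
  exists (n : nat) (x y : 'I_n -> V),
    (forall i, P (x i) /\ Q (y i)) /\ z = \sum_(i < n) br (x i) (y i).

Definition centralizes_hsigma (V : lmodType algC) (br : V -> V -> V)
    (H : vectType algC) (iota : H -> V) (sigma : {linear V -> V}) (z : V) : Prop :=
  forall a : H, sigma (iota a) = iota a -> br (iota a) z = 0.

(* Main.v *)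
Require Import Defs.
From HB Require Import structures.
From mathcomp Require Import all_boot all_order all_algebra all_field.
From Stdlib Require Import Classical FunctionalExtensionality.
Import GRing.Theory Num.Theory.
Local Open Scope ring_scope.
Set Implicit Arguments.

Lemma dbl0 (V : zmodType) (x : V) : x = x + x -> x = 0.
Proof. by move=> h; apply/eqP; rewrite -(addrI x (etrans (addr0 x) h)). Qed.

Section Br.
Variables (V : lmodType algC) (br : V -> V -> V).
Hypothesis hbr : is_lie_bracket br.

Lemma br0l z : br 0 z = 0.
Proof.
case: hbr => hl _ _ _; apply: dbl0.
by have := hl 1 0 0 z; rewrite !scale1r addr0.
Qed.
Lemma br0r z : br z 0 = 0.
Proof.
case: hbr => _ hr _ _; apply: dbl0.
by have := hr 1 z 0 0; rewrite !scale1r addr0.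
Qed.
Lemma brDl x y z : br (x + y) z = br x z + br y z.
Proof. by case: hbr => hl _ _ _; have := hl 1 x y z; rewrite !scale1r. Qed.
Lemma brDr x y z : br z (x + y) = br z x + br z y.
Proof. by case: hbr => _ hr _ _; have := hr 1 z x y; rewrite !scale1r. Qed.
Lemma brZl a x z : br (a *: x) z = a *: br x z.
Proof. by case: hbr => hl _ _ _; rewrite -(addr0 (a *: x)) hl br0l addr0. Qed.
Lemma brZr a x z : br z (a *: x) = a *: br z x.
Proof. by case: hbr => _ hr _ _; rewrite -(addr0 (a *: x)) hr br0r addr0. Qed.
Lemma brN x y : br y x = - br x y.
Proof.
case: hbr => _ _ h0 _.
have := h0 (x + y); rewrite brDl !brDr !h0 add0r addr0 => /eqP.
rewrite addr_eq0 => /eqP ->; by rewrite opprK.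
Qed.
Lemma br_sumr n (F : 'I_n -> V) x : br x (\sum_(i < n) F i) = \sum_(i < n) br x (F i).
Proof. exact: (big_morph (br x) (fun a b => brDr a b x) (br0r x)). Qed.

Lemma wspace_br (H : vectType algC) (iota : H -> V) f g x y :
  wspace br iota f x -> wspace br iota g y ->
  wspace br iota (fun a => f a + g a) (br x y).
Proof.
move=> hx hy a; case: hbr => _ _ _ hj.
have := hj (iota a) x y.
rewrite (brN (iota a) y) (hy a) -scaleNr brZr (hx a).
rewrite brZr (brN x y) scalerN => /eqP.
rewrite -addrA addr_eq0 => /eqP ->.
by rewrite opprD !opprK scaleNr opprK scalerDl addrC.
Qed.
End Br.

Section Bf.
Variables (V : lmodType algC) (br : V -> V -> V) (B : V -> V -> algC).
Hypothesis hbr : is_lie_bracket br.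
Hypothesis hB : is_good_form br B.

Lemma B0l z : B 0 z = 0.
Proof.
case: hB => hl _ _ _; apply: dbl0.
by have := hl 1 0 0 z; rewrite scale1r mul1r addr0.
Qed.
Lemma B0r z : B z 0 = 0.
Proof. by case: hB => _ hs _ _; rewrite hs B0l. Qed.
Lemma BDl x y z : B (x + y) z = B x z + B y z.
Proof. by case: hB => hl _ _ _; have := hl 1 x y z; rewrite scale1r mul1r. Qed.
Lemma BZl a x z : B (a *: x) z = a * B x z.
Proof. by case: hB => hl _ _ _; rewrite -(addr0 (a *: x)) hl B0l addr0. Qed.
Lemma B_suml n (F : 'I_n -> V) z : B (\sum_(i < n) F i) z = \sum_(i < n) B (F i) z.
Proof. exact: (big_morph (B ^~ z) (fun a b => BDl a b z) (B0l z)). Qed.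

Lemma B_orth (H : vectType algC) (iota : H -> V) f v b c :
  (forall a b, br (iota a) (iota b) = 0) ->
  wspace br iota f v -> f b != 0 -> B v (iota c) = 0.
Proof.
move=> hab hv hfb; case: hB => _ _ _ hinv.
have := hinv v (iota b) (iota c).
rewrite hab B0r (@brN _ _ hbr) (hv b) -scaleNr BZl => /eqP.
by rewrite mulf_eq0 oppr_eq0 (negbTE hfb) /= => /eqP.
Qed.
End Bf.

Section Sig.
Variables (V : lmodType algC) (br : V -> V -> V) (B : V -> V -> algC).
Variables (H : vectType algC) (iota : {linear H -> V}) (sigma : {linear V -> V}) (sH : H -> H).

Lemma iter_br : (forall x y : V, sigma (br x y) = br (sigma x) (sigma y)) ->
  forall i x y, iter i (fun v => sigma v) (br x y) =
                br (iter i (fun v => sigma v) x) (iter i (fun v => sigma v) y).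
Proof. by move=> h; elim=> [|i IH] x y //=; rewrite IH h. Qed.

Lemma iterB : (forall x y : V, B (sigma x) (sigma y) = B x y) ->
  forall i x y, B (iter i (fun v => sigma v) x) (iter i (fun v => sigma v) y) = B x y.
Proof. by move=> h; elim=> [|i IH] x y //=; rewrite h IH. Qed.

Lemma iter_iota : (forall a : H, iota (sH a) = sigma (iota a)) ->
  forall i b, iter i (fun v => sigma v) (iota b) = iota (iter i sH b).
Proof. by move=> h; elim=> [|i IH] b //=; rewrite IH h. Qed.

Lemma iter_lin0 i : iter i (fun v => sigma v) 0 = 0.
Proof. by elim: i => //= i ->; rewrite linear0. Qed.
End Sig.

Lemma pi_dual_fix (H : vectType algC) (sH : H -> H) m f a :
  (0 < m)%N -> sH a = a -> pi_dual sH m f a = f a.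
Proof.
move=> hm ha; rewrite /pi_dual.
have e : forall i, iter i (act_dual sH m) f a = f a.
  elim=> [|i IH] //=; rewrite /act_dual (iter_fix _ ha); exact: IH.
under eq_bigr => i _ do rewrite e.
rewrite sumr_const card_ord -(mulr_natr (f a)) mulrC -mulrA mulfV ?mulr1 //.
by rewrite pnatr_eq0 -lt0n.
Qed.

Unset Implicit Arguments.

Theorem lemma5p3 (V : lmodType algC) (br : V -> V -> V) (B : V -> V -> algC)
    (H : vectType algC) (iota : {linear H -> V}) (sigma : {linear V -> V})
    (sH : H -> H) (m : nat) (omega : algC) :
  is_EALA br B iota ->
  twisting_aut br B iota sigma sH m ->
  m.-primitive_root omega ->
  forall alpha beta : H -> algC,
    root_of br iota alpha -> root_of br iota beta -> alpha <> beta ->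
    pi_dual sH m alpha = pi_dual sH m beta ->
    (forall (k : int) (z : V),
        bracket_span br (wspace br iota alpha)
                        (wspace br iota (fun a => - beta a)) z ->
        centralizes_hsigma br iota sigma (pi_g sigma m omega k z)) /\
    (forall z : V,
        bracket_span br (wspace br iota alpha)
                        (wspace br iota (fun a => - beta a)) z ->
        pi_g sigma m omega 0 z = 0).
Proof.
move=> hE hT _ alpha beta _ _ hneq hpi.
case: hE => hbr [hB [hinj [_ [hg0 [hdec _]]]]].
case: hT => hm [hsbr [hper [hsH [hsB hcent]]]].
have hz : forall z, bracket_span br (wspace br iota alpha)
                        (wspace br iota (fun a => - beta a)) z ->
          wspace br iota (fun a => alpha a + - beta a) z.
  move=> z [n [x [y [hxy ->]]]] a.
  rewrite (br_sumr hbr) scaler_sumr; apply: eq_bigr => i _.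
  by case: (hxy i) => hx hy; rewrite (wspace_br hbr hx hy).
have hfix : forall a, sigma (iota a) = iota a -> alpha a = beta a.
  move=> a ha; have sa : sH a = a by apply: hinj; rewrite hsH.
  by rewrite -(pi_dual_fix _ _ _ alpha hm sa) hpi pi_dual_fix.
have hc : forall z, bracket_span br (wspace br iota alpha)
                        (wspace br iota (fun a => - beta a)) z ->
          centralizes_hsigma br iota sigma z.
  move=> z /hz hw a ha; by rewrite hw hfix // subrr scale0r.
have part1 : forall (k : int) (z : V),
        bracket_span br (wspace br iota alpha)
                        (wspace br iota (fun a => - beta a)) z ->
        centralizes_hsigma br iota sigma (pi_g sigma m omega k z).
  move=> k z hs a ha; rewrite /pi_g (brZr hbr) (br_sumr hbr) big1 ?scaler0 // => i _.
  rewrite (brZr hbr) -{1}(iter_fix i ha) -(iter_br _ _ hsbr) (hc z hs a ha).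
  by rewrite iter_lin0 scaler0.
split=> // z hs.
have hab : forall a b, br (iota a) (iota b) = 0.
  move=> a b; have [_ h] := hg0 (iota b).
  by rewrite (h (ex_intro _ b erefl)) scale0r.
have [b' hb'] : exists b', alpha b' + - beta b' != 0.
  apply: NNPP => hn; apply: hneq; apply: functional_extensionality => b.
  apply/eqP; rewrite -subr_eq0; apply/negPn/negP => h; apply: hn; by exists b.
have hzc : forall c, B z (iota c) = 0.
  move=> c; exact: (B_orth hbr hB b' c hab (hz z hs) hb').
have shift : \sum_(i < m) sigma (iter i (fun v => sigma v) z)
           = \sum_(i < m) iter i (fun v => sigma v) z.
  suff gen : forall m', (0 < m')%N -> (forall x, iter m' (fun v => sigma v) x = x) ->
     \sum_(i < m') sigma (iter i (fun v => sigma v) z)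
           = \sum_(i < m') iter i (fun v => sigma v) z by exact: gen.
  case => // n _ hp.
  rewrite big_ord_recr big_ord_recl /=.
  have := hp z; rewrite iterS /= => ->.
  by rewrite addrC.
have hw : pi_g sigma m omega 0 z = m%:R^-1 *: \sum_(i < m) iter i (fun v => sigma v) z.
  rewrite /pi_g; congr (_ *: _); apply: eq_bigr => i _.
  by rewrite mulr0 oppr0 expr0z scale1r.
have [a0 hw0 ha0] : exists2 a, pi_g sigma m omega 0 z = iota a & sigma (iota a) = iota a.
  apply/hcent; split; last exact: part1 0 z hs.
  by rewrite hw linearZ /= linear_sum /= shift.
have hwb : forall b, B (pi_g sigma m omega 0 z) (iota b) = 0.
  move=> b; rewrite hw (BZl hB) (B_suml hB) big1 ?mulr0 // => i _.
  have -> : iota b = iter i (fun v => sigma v) (iota (iter (m - i) sH b)).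
    rewrite -(iter_iota _ _ _ hsH) -iterD subnKC ?hper //.
    exact: ltnW (ltn_ord i).
  rewrite (iterB _ _ hsB); exact: hzc.
have [_ hsym hnd _] := hB.
apply: hnd => y.
have [n [f [v [hv ->]]]] := hdec y.
rewrite hsym (B_suml hB) big1 // => i _.
case: (classic (exists b, f i b != 0)) => [[b hb]|hn].
  rewrite hw0; exact: (B_orth hbr hB b a0 hab (hv i) hb).
have : wspace br iota (fun=> 0) (v i).
  move=> a; rewrite (hv i a); congr (_ *: _); apply/eqP; apply: contraT => h.
  by case: hn; exists a.
move/hg0 => [b ->]; rewrite hsym; exact: hwb.
Qed.
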